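(* Consider a block-fading channel with channel power gain $h(\nu)\ge0$ (a random variable with continuous pdf) at fading state $\nu$, noise power $\sigma^2>0$, and power limits $0<P_{\rm avg}\le P_{\rm peak}$; let $\mathcal P=\{p(\nu): E_\nu[p(\nu)]\le P_{\rm avg},\ 0\le p(\nu)\le P_{\rm peak}\ \forall\nu\}$. For a feasible target $\bar Q\ge0$, consider the problem: maximize over $p(\nu)$ the quantity $E_\nu\big[\log\big(1+\frac{h(\nu)p(\nu)}{\sigma^2}\big)\big]$ subject to $E_\nu[h(\nu)p(\nu)]\ge\bar Q$ and $p\in\mathcal P$. Let $\lambda^\ast\ge0$ and $\beta^\ast\ge0$ be the optimal dual solutions associated with the harvested energy constraint and the average power constraint, respectively. Then the optimal power allocation is $p(\nu)=P_{\rm peak}$ if $h(\nu)\ge\frac{\beta^\ast}{\lambda^\ast}$, and $p(\nu)=\Big[\frac{1}{\beta^\ast-\lambda^\ast h(\nu)}-\frac{\sigma^2}{h(\nu)}\Big]_0^{P_{\rm peak}}$ otherwise, where $[x]_a^b=\max(\min(x,b),a)$.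
   Context: $\log$ is the natural logarithm. This problem models an ideal receiver that decodes information and harvests energy from the same received signal without loss. The dual variables are those of the Lagrangian $E_\nu[\log(1+h p/\sigma^2)]+\lambda(E_\nu[hp]-\bar Q)-\beta(E_\nu[p]-P_{\rm avg})$. *)

(* Defs.v *)
From HB Require Import structures.
From mathcomp Require Import all_boot all_order all_algebra.
From mathcomp Require Import all_classical all_reals all_analysis.
Set Implicit Arguments. Unset Strict Implicit. Unset Printing Implicit Defensive.
Import Order.TTheory GRing.Theory Num.Theory.
Import numFieldNormedType.Exports.
Local Open Scope classical_set_scope.
Local Open Scope ring_scope.

Section SWIPT.
Context {R : realType} {d : measure_display} {T : measurableType d}.

Definition clip (a b x : R) : R := Num.max (Num.min x b) a.

Definition peak_admissible (Ppeak : R) (p : T -> R) : Prop :=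
  measurable_fun setT p /\ (forall nu, 0 <= p nu <= Ppeak).

Definition Ex (P : probability T R) (f : T -> R) : \bar R :=
  (\int[P]_nu (f nu)%:E)%E.

Definition rate (P : probability T R) (h : T -> R) (sigma2 : R) (p : T -> R)
  : \bar R := Ex P (fun nu => ln (1 + h nu * p nu / sigma2)).

Definition feasible (P : probability T R) (h : T -> R) (Pavg Ppeak Qbar : R)
  (p : T -> R) : Prop :=
  peak_admissible Ppeak p /\ (Ex P p <= Pavg%:E)%E
  /\ (Qbar%:E <= Ex P (fun nu => (h nu * p nu)%R))%E.

Definition primal_optimal (P : probability T R) (h : T -> R)
  (sigma2 Pavg Ppeak Qbar : R) (p : T -> R) : Prop :=
  feasible P h Pavg Ppeak Qbar p /\
  forall q, feasible P h Pavg Ppeak Qbar q ->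
    (rate P h sigma2 q <= rate P h sigma2 p)%E.

Definition lagrangian (P : probability T R) (h : T -> R)
  (sigma2 Pavg Qbar lam beta : R) (p : T -> R) : \bar R :=
  (rate P h sigma2 p
   + lam%:E * (Ex P (fun nu => (h nu * p nu)%R) - Qbar%:E)
   - beta%:E * (Ex P p - Pavg%:E))%E.

Definition dual_fun (P : probability T R) (h : T -> R)
  (sigma2 Pavg Ppeak Qbar lam beta : R) : \bar R :=
  ereal_sup [set lagrangian P h sigma2 Pavg Qbar lam beta p
            | p in peak_admissible Ppeak].

Definition dual_optimal (P : probability T R) (h : T -> R)
  (sigma2 Pavg Ppeak Qbar lam beta : R) : Prop :=
  0 <= lam /\ 0 <= beta /\
  forall lam' beta', 0 <= lam' -> 0 <= beta' ->
    (dual_fun P h sigma2 Pavg Ppeak Qbar lam beta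
     <= dual_fun P h sigma2 Pavg Ppeak Qbar lam' beta')%E.

(* the claimed allocation; "h >= beta/lam" is written lam*h >= beta so that
   lam = 0 is read as beta/lam = +oo (when beta > 0) *)
Definition opt_alloc (h : T -> R) (sigma2 Ppeak lam beta : R) (nu : T) : R :=
  if beta <= lam * h nu then Ppeak
  else clip 0 Ppeak ((beta - lam * h nu)^-1 - sigma2 / h nu).

Definition has_continuous_pdf (P : probability T R) (h : T -> R) : Prop :=
  exists f : R -> R,
    (forall x, 0 <= f x) /\ measurable_fun setT f /\
    {within `[0, +oo[%classic, continuous f} /\
    forall A, measurable A ->
      P (h @^-1` A) = (\int[lebesgue_measure]_(x in A) (f x)%:E)%E.

End SWIPT.

(* Main.v *)
Require Import Defs.
From HB Require Import structures.
From mathcomp Require Import all_boot all_order all_algebra.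
From mathcomp Require Import all_classical all_reals all_analysis.
From mathcomp Require Import ring lra measurable_realfun.
Import Order.TTheory GRing.Theory Num.Theory.
Import numFieldNormedType.Exports.
Local Open Scope classical_set_scope.
Local Open Scope ring_scope.

Section RealLemmas.
Context {R : realType}.
Implicit Types x y : R.

Lemma ln_le_sub1 x : 0 < x -> ln x <= x - 1.
Proof.
move=> x0; have H := @le_ln1Dx R (x - 1).
by rewrite -{1}(subrK 1 x) addrC; apply: H; lra.
Qed.

Lemma log_quad (X Y M : R) : 0 < X -> 0 < Y -> X <= M -> Y <= M ->
  ln X - ln Y <= (X - Y) / Y - (X - Y)^+2 / (4 * M^+2).
Proof.
move=> X0 Y0 XM YM.
have M0 : 0 < M by lra.
set a := Num.sqrt X; set b := Num.sqrt Y.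
have a0 : 0 < a by rewrite sqrtr_gt0.
have b0 : 0 < b by rewrite sqrtr_gt0.
have Xa : X = a ^+ 2 by rewrite sqr_sqrtr // ltW.
have Yb : Y = b ^+ 2 by rewrite sqr_sqrtr // ltW.
have e : ln X - ln Y = 2 * ln (a / b).
  rewrite -lnV ?posrE // -lnM ?posrE ?invr_gt0 //.
  rewrite Xa Yb -exprVn -exprMn lnXn ?divr_gt0 // mulr2n mulr_natl mulr2n //.
have r0 : 0 < a / b by rewrite divr_gt0.
have hl := ln_le_sub1 _ r0.
rewrite e.
have key : 2 * (a / b - 1) <= (X - Y) / Y - (X - Y)^+2 / (4 * M^+2).
  rewrite Xa Yb in XM YM *.
  have ab : b * (a + b) <= 2 * M by nra.
  have ab2 : (b * (a + b))^+2 <= 4 * M^+2.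
    have hb : 0 <= b * (a + b) by nra.
    rewrite expr2; nra.
  have E1 : 2 * (a / b - 1) = (a^+2 - b^+2) / b^+2 - (a - b)^+2 / b^+2.
    by field; rewrite gt_eqF.
  rewrite E1 lerD2l lerN2.
  have E2 : (a ^+ 2 - b ^+ 2) ^+ 2 = (a - b)^+2 * (a + b)^+2 by ring.
  rewrite E2.
  have k : (a+b)^+2 / (4*M^+2) <= (b^+2)^-1.
    rewrite -subr_ge0.
    have -> : (b^+2)^-1 - (a+b)^+2 / (4*M^+2) = (4*M^+2 - (b*(a+b))^+2) / (4*M^+2 * b^+2).
      by field; rewrite ?gt_eqF //; nra.
    apply: divr_ge0; first lra.
    nra.
  have -> : (a - b) ^+ 2 * (a + b) ^+ 2 / (4 * M ^+ 2) = (a - b)^+2 * ((a+b)^+2 / (4*M^+2)) by rewrite mulrA.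
  by apply: ler_wpM2l; [apply: sqr_ge0 | exact: k].
nra.
Qed.



Lemma clip_in (Pk z : R) : 0 <= Pk -> 0 <= clip 0 Pk z <= Pk.
Proof.
move=> P0; rewrite /clip; apply/andP; split; first by rewrite le_max lexx orbT.
by rewrite ge_max P0 andbT ge_min lexx orbT.
Qed.

Definition optv (H s Pk l b : R) :=
  if b <= l * H then Pk else clip 0 Pk ((b - l*H)^-1 - s / H).

Lemma FO (H s Pk l b x : R) : 0 < H -> 0 < s -> 0 <= Pk -> 0 <= l -> 0 <= b ->
  0 <= x <= Pk ->
  (H / (s + H * optv H s Pk l b) + l * H - b) * (x - optv H s Pk l b) <= 0.
Proof.
move=> H0 s0 P0 l0 b0 /andP[x0 xP].
rewrite /optv; set y := (X in s + H * X); rewrite /y; case: ifP => [bl|/negbT]; rewrite -?ltNge.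
  have : 0 < H / (s + H * Pk) by rewrite divr_gt0 //; nra.
  move=> q; rewrite mulr_ge0_le0 //; lra.
move=> lb; set D := b - l * H; have D0 : 0 < D by rewrite /D; lra.
set z := D^-1 - s / H.
have e : H / (s + H * y) + l * H - b = H / (s + H * y) - D by rewrite /D; ring.
rewrite /clip.
have [zP|zP] := lerP Pk z.
  rewrite (max_l P0).
  (* g'(Pk) >= 0 *)
  have : D <= H / (s + H * Pk).
    have DH : 0 < D * H by rewrite mulr_gt0.
    have e2 : (D^-1 - s / H) * (D * H) = H - s * D by field; rewrite !gt_eqF.
    have := ler_wpM2r (ltW DH) zP; rewrite /z e2 => h1.
    rewrite ler_pdivlMr; last nra.
    nra.
  move=> h1.
  have -> : H / (s + H * Pk) + l * H - b = H / (s + H * Pk) - D by rewrite /D; ring.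
  apply: mulr_ge0_le0; lra.
have [z0|z0] := lerP z 0.
  rewrite ?(max_r z0) mulr0 addr0.
  have : H / s <= D.
    have DH : 0 < D * H by rewrite mulr_gt0.
    have e2 : (D^-1 - s / H) * (D * H) = H - s * D by field; rewrite !gt_eqF.
    have := ler_wpM2r (ltW DH) z0; rewrite /z e2 mul0r => h1.
    rewrite ler_pdivrMr //; nra.
  move=> h1.
  have -> : H / s + l * H - b = H / s - D by rewrite /D; ring.
  apply: mulr_le0_ge0; lra.
rewrite ?(max_l (ltW z0)).
have -> : H / (s + H * z) + l * H - b = 0.
  rewrite /z /D.
  have -> : s + H * ((b - l * H)^-1 - s / H) = H / (b - l * H).
    by field; rewrite gt_eqF //; lra.
  by field; rewrite ?gt_eqF //; lra.
by rewrite mul0r.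
Qed.


Lemma optv_in H s Pk l b : 0 <= Pk -> 0 <= optv H s Pk l b <= Pk.
Proof.
move=> P0; rewrite /optv; case: ifP => _; last exact: clip_in.
by rewrite P0 lexx.
Qed.

Lemma ln1Dq (H s x : R) : 0 < s -> 0 <= H -> 0 <= x ->
  ln (1 + H * x / s) = ln (s + H * x) - ln s.
Proof.
move=> s0 H0 x0.
have -> : 1 + H * x / s = (s + H * x) * s^-1 by field; rewrite gt_eqF.
rewrite lnM ?posrE ?invr_gt0 //; last by nra.
by rewrite lnV ?posrE.
Qed.

Lemma core (H s Pk l b x : R) : 0 < H -> 0 < s -> 0 <= Pk -> 0 <= l -> 0 <= b ->
  0 <= x <= Pk ->
  ln (1 + H * x / s) + l * (H * x) - b * x <=
  ln (1 + H * optv H s Pk l b / s) + l * (H * optv H s Pk l b) - b * optv H s Pk l b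
  - H^+2 * (x - optv H s Pk l b)^+2 / (4 * (s + H * Pk)^+2).
Proof.
move=> H0 s0 P0 l0 b0 xP.
have fo := @FO H s Pk l b x H0 s0 P0 l0 b0 xP.
have /andP[y0 yP] := optv_in H s Pk l b P0.
set y := optv H s Pk l b in fo y0 yP *.
case/andP: xP => x0 xP.
rewrite !ln1Dq //; try lra.
have hq := @log_quad (s + H * x) (s + H * y) (s + H * Pk).
have q1 : 0 < s + H * x by nra.
have q2 : 0 < s + H * y by nra.
have q3 : s + H * x <= s + H * Pk by nra.
have q4 : s + H * y <= s + H * Pk by nra.
have {hq q1 q2 q3 q4} hq := hq q1 q2 q3 q4.
have e1 : (s + H * x - (s + H * y)) / (s + H * y) = H / (s + H * y) * (x - y).
  by field; apply/eqP; nra.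
have e2 : (s + H * x - (s + H * y)) ^+ 2 = H^+2 * (x - y)^+2 by ring.
rewrite e1 e2 in hq.
set A := H / (s + H * y) in fo hq.
lra.
Qed.

End RealLemmas.

Lemma andP_intro (a b : bool) : a -> b -> a && b.
Proof. by move=> -> ->. Qed.

Section Meas.
Context {R : realType}.

Lemma gap (c w dd Pk : R) : 0 < c -> `|dd| <= Pk ->
  - c * dd^+2 + w * dd <= Num.min (`|w| * Pk) (w^+2 * (4 * c)^-1).
Proof.
move=> c0 dP; rewrite le_min; apply/andP; split.
  have : w * dd <= `|w| * Pk.
    by rewrite (le_trans (ler_norm _)) // normrM ler_wpM2l.
  have : 0 <= c * dd^+2 by rewrite mulr_ge0 ?sqr_ge0 // ltW.
  lra.
have e : w ^+ 2 * (4 * c)^-1 - (- c * dd ^+ 2 + w * dd) = (w - 2 * c * dd)^+2 * (4 * c)^-1.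
  by field; rewrite gt_eqF.
rewrite -subr_ge0 e mulr_ge0 ?sqr_ge0 // invr_ge0; lra.
Qed.

Lemma measurable_inv : measurable_fun setT (@GRing.inv R).
Proof.
have -> : @GRing.inv R = fun x => if x == 0 then 0 else
   if 0 < x then expR (- ln x) else - expR (- ln (- x)).
  apply/funext => x; case: eqP => [->|/eqP x0]; first by rewrite invr0.
  rewrite expRN; case: ifP => xp.
  by have := lnK_eq x; rewrite xp => /eqP ->.
  have xn : 0 < - x by rewrite oppr_gt0 lt_neqAle x0 leNgt xp.
  by have := lnK_eq (- x); rewrite xn expRN => /eqP ->; rewrite invrN opprK.
have m1 : measurable_fun setT (fun x : R => x == 0).
  by apply: measurable_fun_eqr => //; exact: measurable_cst.
have m2 : measurable_fun setT (fun x : R => 0 < x).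
  by apply: measurable_fun_ltr => //; exact: measurable_cst.
have m3 : measurable_fun setT (fun x : R => expR (- ln x)).
  apply: measurableT_comp => //; apply: measurableT_comp => //; exact: measurable_ln.
have m4 : measurable_fun setT (fun x : R => - expR (- ln (- x))).
  apply: measurableT_comp => //; apply: measurableT_comp => //.
  apply: measurableT_comp => //; apply: measurableT_comp => //; exact: measurable_ln.
have m5 := measurable_fun_ifT m2 m3 m4.
exact: (measurable_fun_ifT m1 (measurable_cst _) m5).
Qed.

End Meas.

Section Prob.
Context {R : realType} {d : measure_display} {T : measurableType d}.
Variable P : probability T R.
Variable h : T -> R.
Hypothesis mh : measurable_fun setT h.
Hypothesis h0 : forall nu, 0 <= h nu.
Hypothesis ih : P.-integrable setT (fun nu => (h nu)%:E).

Lemma int_bound (f : T -> R) a c : measurable_fun setT f -> 0 <= a -> 0 <= c ->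
  (forall x, `|f x| <= a * h x + c) -> P.-integrable setT (EFin \o f).
Proof.
move=> mf a0 c0 fb.
have ig : P.-integrable setT (EFin \o (fun x => a * h x + c)).
  have i1 := integrableZl measurableT a ih.
  have i2 := @finite_measure_integrable_cst _ _ _ P setT c measurableT.
  have i3 := integrableD measurableT i1 i2.
  apply: (eq_integrable measurableT _ _ _ i3) => x _ /=.
  by rewrite EFinD EFinM.
have mf' : measurable_fun setT (EFin \o f) by exact/measurable_EFinP.
apply: (le_integrable measurableT mf' _ ig).
move=> x _ /=.
rewrite lee_fin (le_trans (fb x)) //.
by rewrite ler_norm.
Qed.

Lemma Ex_fin (f : T -> R) : P.-integrable setT (EFin \o f) ->
  Ex P f = (\int[P]_x f x)%:E.
Proof.
by move=> fi; rewrite /Ex /Rintegral fineK //; exact: integrable_fin_num.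
Qed.


Hypothesis hpdf : has_continuous_pdf P h.

Definition N0 := h @^-1` [set 0].

Lemma mN0 : measurable N0.
Proof. by rewrite /N0 -[X in measurable X]setTI; apply: mh => //; exact: measurable_set1. Qed.

Lemma PN0 : P N0 = 0%E.
Proof.
case: hpdf => f [f0 [mf [_ hf]]].
rewrite /N0 hf; last exact: measurable_set1.
have m1 : measurable [set (0:R)] := measurable_set1 0.
have m2 : measurable_fun [set (0:R)] (fun x => (f x)%:E).
  apply/measurable_EFinP; exact: measurable_funS mf.
apply: (@null_set_integral _ _ _ lebesgue_measure _ _ m1 m2).
exact: lebesgue_measure_set1.
Qed.

Lemma I_negl (f : T -> R) : P.-integrable setT (EFin \o f) ->
  \int[P]_x f x = \int[P]_(x in setT `\` N0) f x.
Proof.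
by move=> fi; rewrite /Rintegral (negligible_integral mN0 measurableT fi PN0).
Qed.

Lemma le_ae (f g : T -> R) : P.-integrable setT (EFin \o f) ->
  P.-integrable setT (EFin \o g) -> (forall x, h x != 0 -> f x <= g x) ->
  \int[P]_x f x <= \int[P]_x g x.
Proof.
move=> fi gi fg; rewrite (I_negl _ fi) (I_negl _ gi).
have mS : measurable (setT `\` N0) by apply: measurableD => //; exact: mN0.
apply: le_Rintegral => //.
- exact: integrableS fi.
- exact: integrableS gi.
move=> x [_ /=]; rewrite /N0 /= => hx; apply: fg; apply/eqP; exact: hx.
Qed.


Lemma lim_arg (X del : R) (a K : T -> R) : 0 < del ->
  measurable_fun setT a -> measurable_fun setT K ->
  (forall x, 0 <= a x) -> (forall x, 0 <= K x) ->
  P.-integrable setT (EFin \o a) ->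
  (forall t, 0 < t <= del -> 0 <= X + \int[P]_x Num.min (a x) (t * K x)) ->
  0 <= X.
Proof.
move=> d0 ma mK a0 K0 ia H.
rewrite leNgt; apply/negP => X0.
pose k n x := Num.min (a x) ((del * harmonic n) * K x).
have mk n : measurable_fun setT (k n).
  apply: measurable_minr => //; apply: measurable_funM => //; exact: measurable_cst.
have k0 n x : 0 <= k n x.
  by rewrite /k le_min a0 /= mulr_ge0 // mulr_ge0 // ltW.
have ka n x : k n x <= a x by rewrite /k ge_min lexx.
have cvk x : (fun n => (k n x)%:E) @ \oo --> 0%:E.
  apply: cvg_EFin; first exact: nearW.
  have up : (fun n => del * harmonic n * K x) @ \oo --> del * 0 * K x.
    apply: cvgM; last exact: cvg_cst.
    apply: cvgM; first exact: cvg_cst.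
    exact: cvg_harmonic.
  rewrite mulr0 mul0r in up.
  apply: (squeeze_cvgr _ (cvg_cst 0) up).
  by apply: nearW => n /=; rewrite k0 /= /k ge_min lexx orbT.
have mke n : measurable_fun setT (EFin \o k n) by apply/measurable_EFinP.
have bd : {ae P, forall x n, setT x -> (`|(EFin \o k n) x| <= (EFin \o a) x)%E}.
  apply: aeW => x n _ /=; rewrite lee_fin ger0_norm //.
have [_ _ cv] := @dominated_convergence _ _ _ P setT measurableT
  (fun n => EFin \o k n) (cst 0%E) (EFin \o a) mke
  (measurable_cst _) (aeW _ (fun x _ => cvk x)) ia bd.
rewrite integral0 in cv.
have mX : 0 < - X by rewrite oppr_gt0.
have := cvgr_lt 0 (fine_cvg cv) (-X) mX.
move=> /(_ eventually_filter) [N _ HN].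
have := HN N (leqnn N); rewrite /= => HN'.
have t0 : 0 < del * harmonic N by rewrite mulr_gt0 // harmonic_gt0.
have tle : del * harmonic N <= del.
  by rewrite ger_pMr // /= invf_le1 // ler1n.
have := H (del * harmonic N) (andP_intro _ _ t0 tle).
rewrite /Rintegral; rewrite /k in HN'; lra.
Qed.


Variables (s Pa Pk Q l b : R).
Hypotheses (s0 : 0 < s) (Pk0 : 0 <= Pk) (l0 : 0 <= l) (b0 : 0 <= b).

Definition ps := opt_alloc h s Pk l b.

Lemma ps_in x : 0 <= ps x <= Pk.
Proof. exact: (optv_in (h x) s Pk l b Pk0). Qed.

Lemma mps : measurable_fun setT ps.
Proof.
rewrite /ps /opt_alloc.
have mlh : measurable_fun setT (fun x => l * h x).
  by apply: measurable_funM => //; exact: measurable_cst.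
have m1 : measurable_fun setT (fun x => b <= l * h x).
  by apply: measurable_fun_ler => //; exact: measurable_cst.
have mz : measurable_fun setT (fun x => (b - l * h x)^-1 - s / h x).
  apply: measurable_funB.
    apply: measurableT_comp; first exact: measurable_inv.
    by apply: measurable_funB => //; exact: measurable_cst.
  apply: measurable_funM; first exact: measurable_cst.
  by apply: measurableT_comp => //; exact: measurable_inv.
have m2 : measurable_fun setT (fun x => clip 0 Pk ((b - l * h x)^-1 - s / h x)).
  rewrite /clip.
  apply: measurable_maxr; last exact: measurable_cst.
  by apply: measurable_minr => //; exact: measurable_cst.
exact: (measurable_fun_ifT m1 (measurable_cst _) m2).
Qed.

Lemma ps_adm : peak_admissible Pk ps.
Proof. by split; [exact: mps | exact: ps_in]. Qed.

Definition lr (q : T -> R) x := ln (1 + h x * q x / s).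

Lemma lr_bd q x : 0 <= q x -> 0 <= lr q x <= h x * q x / s.
Proof.
move=> q0; have y0 : 0 <= h x * q x / s by rewrite divr_ge0 ?mulr_ge0 // ltW.
apply/andP; split; first by rewrite /lr ln_ge0 // lerDl.
by rewrite /lr le_ln1Dx //; lra.
Qed.

Lemma mlr q : measurable_fun setT q -> measurable_fun setT (lr q).
Proof.
move=> mq; rewrite /lr; apply: measurableT_comp; first exact: measurable_ln.
apply: measurable_funD; first exact: measurable_cst.
apply: measurable_funM; last exact: measurable_cst.
exact: measurable_funM.
Qed.

Lemma int_comb q (al be ga : R) : peak_admissible Pk q ->
  P.-integrable setT (EFin \o (fun x => al * lr q x + be * (h x * q x) + ga * q x)).
Proof.
case=> mq qb.
apply: (int_bound _ (`|al| * (Pk / s) + `|be| * Pk) (`|ga| * Pk)).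
- apply: measurable_funD; first apply: measurable_funD.
  + by apply: measurable_funM; [exact: measurable_cst | exact: mlr].
  + by apply: measurable_funM; [exact: measurable_cst | exact: measurable_funM].
  + by apply: measurable_funM; [exact: measurable_cst | exact: mq].
- by rewrite addr_ge0 // mulr_ge0 // divr_ge0 // ltW.
- by rewrite mulr_ge0.
move=> x; have /andP[q0 qP] := qb x; have /andP[l0' l1] := lr_bd _ _ q0.
have hx := h0 x.
have e1 : `|al * lr q x| <= `|al| * (Pk / s * h x).
  rewrite normrM ler_wpM2l // ger0_norm // (le_trans l1) //.
  have : h x * q x <= Pk * h x by nra.
  have si : 0 <= s^-1 by rewrite invr_ge0 ltW.
  nra.
have e2 : `|be * (h x * q x)| <= `|be| * (Pk * h x).
  rewrite normrM ler_wpM2l // ger0_norm ?mulr_ge0 //.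
  by rewrite mulrC ler_wpM2r.
have e3 : `|ga * q x| <= `|ga| * Pk.
  by rewrite normrM ler_wpM2l // ger0_norm.
apply: (le_trans (ler_normD _ _)).
have e4 := ler_normD (al * lr q x) (be * (h x * q x)).
have -> : (`|al| * (Pk / s) + `|be| * Pk) * h x + `|ga| * Pk =
  `|al| * (Pk / s * h x) + `|be| * (Pk * h x) + `|ga| * Pk by ring.
lra.
Qed.

Lemma int_comb' q (al be ga : R) (f : T -> R) : peak_admissible Pk q ->
  (forall x, f x = al * lr q x + be * (h x * q x) + ga * q x) ->
  P.-integrable setT (EFin \o f).
Proof.
move=> qa fe; have -> : f = (fun x => al * lr q x + be * (h x * q x) + ga * q x).
  by apply/funext.
exact: int_comb.
Qed.

Definition Iv (f : T -> R) := \int[P]_x f x.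

Lemma I_comb q (al be ga : R) (f : T -> R) : peak_admissible Pk q ->
  (forall x, f x = al * lr q x + be * (h x * q x) + ga * q x) ->
  Iv f = al * Iv (lr q) + be * Iv (fun x => h x * q x) + ga * Iv q.
Proof.
move=> qa fe; have -> : f = (fun x => al * lr q x + be * (h x * q x) + ga * q x).
  by apply/funext.
have i1 : P.-integrable setT (EFin \o lr q).
  by apply: (int_comb' q 1 0 0) => // x; ring.
have i2 : P.-integrable setT (EFin \o (fun x => h x * q x)).
  by apply: (int_comb' q 0 1 0) => // x; ring.
have i3 : P.-integrable setT (EFin \o q).
  by apply: (int_comb' q 0 0 1) => // x; ring.
have i12 : P.-integrable setT (EFin \o (fun x => al * lr q x + be * (h x * q x))).
  by apply: (int_comb' q al be 0) => // x; ring.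
rewrite /Iv RintegralD //; last by apply: (int_comb' q 0 0 ga) => // x; ring.
rewrite RintegralD //; last by apply: (int_comb' q 0 be 0) => // x; ring.
  2: by apply: (int_comb' q al 0 0) => // x; ring.
by rewrite !RintegralZl.
Qed.


Definition LRr (l' b' : R) (q : T -> R) :=
  Iv (lr q) + l' * (Iv (fun x => h x * q x) - Q) - b' * (Iv q - Pa).

Lemma int_lr q : peak_admissible Pk q -> P.-integrable setT (EFin \o lr q).
Proof. by move=> qa; apply: (int_comb' q 1 0 0) => // x; ring. Qed.
Lemma int_hq q : peak_admissible Pk q ->
  P.-integrable setT (EFin \o (fun x => h x * q x)).
Proof. by move=> qa; apply: (int_comb' q 0 1 0) => // x; ring. Qed.
Lemma int_q q : peak_admissible Pk q -> P.-integrable setT (EFin \o q).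
Proof. by move=> qa; apply: (int_comb' q 0 0 1) => // x; ring. Qed.

Lemma lag_eq q l' b' : peak_admissible Pk q ->
  lagrangian P h s Pa Q l' b' q = (LRr l' b' q)%:E.
Proof.
move=> qa; rewrite /lagrangian /rate.
rewrite (Ex_fin _ (int_lr _ qa)) (Ex_fin _ (int_hq _ qa)) (Ex_fin _ (int_q _ qa)).
by rewrite /LRr /Iv -!EFinB.
Qed.

Definition cc x := h x ^+ 2 / (4 * (s + h x * Pk) ^+ 2).
Definition mm (u v : R) x :=
  Num.min (`|u * h x - v| * Pk) ((u * h x - v) ^+ 2 * (4 * cc x)^-1).

Lemma cc_ge0 x : 0 <= cc x.
Proof. by rewrite /cc divr_ge0 ?sqr_ge0 // mulr_ge0 ?sqr_ge0. Qed.

Lemma mm_ge0 u v x : 0 <= mm u v x.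
Proof.
rewrite /mm le_min mulr_ge0 // mulr_ge0 ?sqr_ge0 // invr_ge0 mulr_ge0 //.
exact: cc_ge0.
Qed.

Lemma mcc : measurable_fun setT cc.
Proof.
rewrite /cc; apply: measurable_funM; first exact: measurable_funX.
apply: measurableT_comp; first exact: measurable_inv.
apply: measurable_funM; first exact: measurable_cst.
apply: measurable_funX; apply: measurable_funD; first exact: measurable_cst.
by apply: measurable_funM => //; exact: measurable_cst.
Qed.

Lemma int_mm u v : P.-integrable setT (EFin \o mm u v).
Proof.
have mw : measurable_fun setT (fun x => u * h x - v).
  apply: measurable_funB; last exact: measurable_cst.
  by apply: measurable_funM => //; exact: measurable_cst.
apply: (int_bound _ (`|u| * Pk) (`|v| * Pk)).
- apply: measurable_minr.
    apply: measurable_funM; last exact: measurable_cst.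
    by apply: measurableT_comp => //; exact: normr_measurable.
  apply: measurable_funM; first exact: measurable_funX.
  apply: measurableT_comp; first exact: measurable_inv.
  by apply: measurable_funM; [exact: measurable_cst | exact: mcc].
- by rewrite mulr_ge0.
- by rewrite mulr_ge0.
move=> x; rewrite ger0_norm ?mm_ge0 //.
rewrite /mm ge_min; apply/orP; left.
have := ler_normB (u * h x) v; rewrite normrM (ger0_norm (h0 x)) => e.
have := ler_wpM2r Pk0 e; lra.
Qed.


Lemma pw q l' b' x : 0 < h x -> 0 <= q x <= Pk ->
  (lr q x + l' * (h x * q x) - b' * q x) - (lr ps x + l' * (h x * ps x) - b' * ps x)
  <= - cc x * (q x - ps x) ^+ 2 + ((l' - l) * h x - (b' - b)) * (q x - ps x).
Proof.
move=> hp qx.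
have := @core R (h x) s Pk l b (q x) hp s0 Pk0 l0 b0 qx.
rewrite -/(ps x) -/(lr q x) -/(lr ps x).
have -> : h x ^+ 2 * (q x - ps x) ^+ 2 / (4 * (s + h x * Pk) ^+ 2)
  = cc x * (q x - ps x) ^+ 2 by rewrite /cc mulrAC.
set L1 := lr q x; set L2 := lr ps x; set C := cc x * (q x - ps x) ^+ 2.
have -> : - cc x * (q x - ps x) ^+ 2 = - C by rewrite /C mulNr.
move=> H.
rewrite -subr_ge0.
have -> : - C + ((l' - l) * h x - (b' - b)) * (q x - ps x) -
  (L1 + l' * (h x * q x) - b' * q x - (L2 + l' * (h x * ps x) - b' * ps x))
  = (L2 + l * (h x * ps x) - b * ps x - C) - (L1 + l * (h x * q x) - b * q x).
  by ring.
by rewrite subr_ge0.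
Qed.

Lemma cc_gt0 x : 0 < h x -> 0 < cc x.
Proof.
move=> hp; rewrite /cc divr_gt0 ?exprn_gt0 // mulr_gt0 // exprn_gt0 //.
by rewrite ltr_wpDr // mulr_ge0 ?(h0 x).
Qed.

Lemma Fcomb q l' b' : peak_admissible Pk q ->
  Iv (fun x => lr q x + l' * (h x * q x) - b' * q x) =
  Iv (lr q) + l' * Iv (fun x => h x * q x) - b' * Iv q.
Proof.
move=> qa; rewrite (I_comb q 1 l' (- b') _ qa); last by move=> x; ring.
ring.
Qed.

Lemma int_F q l' b' : peak_admissible Pk q ->
  P.-integrable setT (EFin \o (fun x => lr q x + l' * (h x * q x) - b' * q x)).
Proof. by move=> qa; apply: (int_comb' q 1 l' (- b')) => // x; ring. Qed.

Lemma int_sub (f g : T -> R) : P.-integrable setT (EFin \o f) ->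
  P.-integrable setT (EFin \o g) -> P.-integrable setT (EFin \o (fun x => f x - g x)).
Proof.
move=> fi gi; have := integrableB measurableT fi gi.
apply: eq_integrable => // x _ /=; by rewrite EFinB.
Qed.

Lemma key_diff q l' b' : peak_admissible Pk q ->
  LRr l' b' q - LRr l' b' ps =
  Iv (fun x => (lr q x + l' * (h x * q x) - b' * q x)
             - (lr ps x + l' * (h x * ps x) - b' * ps x)).
Proof.
move=> qa; have pa := ps_adm.
rewrite /Iv RintegralB //; [|exact: int_F|exact: int_F].
rewrite -!/(Iv _) !Fcomb //.
by rewrite /LRr; ring.
Qed.

Lemma key_bound q l' b' : peak_admissible Pk q ->
  LRr l' b' q <= LRr l' b' ps + Iv (mm (l' - l) (b' - b)).
Proof.
move=> qa; rewrite -lerBlDl key_diff //.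
apply: le_ae.
- by apply: int_sub; apply: int_F => //; exact: ps_adm.
- exact: int_mm.
move=> x hx; have hp : 0 < h x by rewrite lt_neqAle eq_sym hx h0.
case: qa => _ /(_ x) qx.
apply: (le_trans (pw q l' b' x hp qx)); apply: gap; first exact: cc_gt0.
have := ps_in x; case/andP: qx => ? ?; rewrite ler_norml; lra.
Qed.

Lemma cc_bd q x : 0 <= q x <= Pk -> `|cc x * (q x - ps x) ^+ 2| <= 0 * h x + 4^-1.
Proof.
move=> qx; have := ps_in x; move: qx => /andP[q0 qP] /andP[p0 pP].
rewrite mul0r add0r ger0_norm; last by rewrite mulr_ge0 ?cc_ge0 ?sqr_ge0.
have hx := h0 x.
have M0 : 0 < s + h x * Pk by rewrite ltr_wpDr // mulr_ge0.
have d2 : (q x - ps x) ^+ 2 <= Pk ^+ 2.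
  have h1 : 0 <= Pk - (q x - ps x) by lra.
  have h2 : 0 <= Pk + (q x - ps x) by lra.
  have := mulr_ge0 h1 h2; rewrite !expr2; lra.
apply: (le_trans (ler_wpM2l (cc_ge0 x) d2)).
rewrite /cc mulrAC -exprMn.
have e : (h x * Pk) ^+ 2 <= (s + h x * Pk) ^+ 2.
  have hP : 0 <= h x * Pk by rewrite mulr_ge0.
  have := mulr_ge0 (ltW s0) (addr_ge0 (ltW M0) hP); rewrite !expr2; lra.
rewrite ler_pdivrMr; last by rewrite mulr_gt0 // exprn_gt0.
by rewrite mulrA mulVf // mul1r.
Qed.

Lemma key_unique q : peak_admissible Pk q ->
  LRr l b q <= LRr l b ps - Iv (fun x => cc x * (q x - ps x) ^+ 2).
Proof.
move=> qa; have pa := ps_adm.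
have ic : P.-integrable setT (EFin \o (fun x => cc x * (q x - ps x) ^+ 2)).
  apply: (int_bound _ 0 (4^-1)).
  - apply: measurable_funM; first exact: mcc.
    apply: measurable_funX; apply: measurable_funB; first by case: qa.
    exact: mps.
  - by [].
  - by rewrite invr_ge0.
  by move=> x; apply: cc_bd; case: qa.
suff : LRr l b q - LRr l b ps + Iv (fun x => cc x * (q x - ps x) ^+ 2) <= 0 by lra.
rewrite key_diff // /Iv -RintegralD //; last by apply: int_sub; apply: int_F.
have -> : 0 = \int[P]_x (0 : R).
  by rewrite Rintegral_cst // mul0r.
apply: le_ae => //.
- have := integrableD measurableT (int_sub _ _ (int_F _ l b qa) (int_F _ l b pa)) ic.
  by apply: eq_integrable => // x _ /=; rewrite EFinD.
- exact: (@finite_measure_integrable_cst _ _ _ P setT 0 measurableT).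
move=> x hx; have hp : 0 < h x by rewrite lt_neqAle eq_sym hx h0.
case: qa => _ /(_ x) qx.
have := pw q l b x hp qx; rewrite !subrr mul0r subrr mul0r addr0.
lra.
Qed.


Lemma I_mm0 : Iv (mm 0 0) = 0.
Proof.
rewrite /Iv (_ : mm 0 0 = fun _ => 0); last first.
  by apply/funext => x; rewrite /mm !mul0r subrr normr0 mul0r expr0n /= mul0r minxx.
by rewrite Rintegral_cst // mul0r.
Qed.

Lemma dual_le l' b' : (dual_fun P h s Pa Pk Q l' b'
  <= (LRr l' b' ps + Iv (mm (l' - l) (b' - b)))%:E)%E.
Proof.
rewrite /dual_fun; apply: ge_ereal_sup => _ [q qa <-].
by rewrite lag_eq // lee_fin; exact: key_bound.
Qed.

Lemma dual_eq : dual_fun P h s Pa Pk Q l b = (LRr l b ps)%:E.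
Proof.
apply/eqP; rewrite eq_le; apply/andP; split.
  by have := dual_le l b; rewrite !subrr I_mm0 addr0.
rewrite -lag_eq; last exact: ps_adm.
by apply: ereal_sup_ubound; exists ps => //; exact: ps_adm.
Qed.

Definition wa (u v : R) x := `|u * h x - v| * Pk.
Definition wK (u v : R) x := (u * h x - v) ^+ 2 * (4 * cc x)^-1.

Lemma mwa u v : measurable_fun setT (wa u v).
Proof.
have mw : measurable_fun setT (fun x => u * h x - v).
  apply: measurable_funB; last exact: measurable_cst.
  by apply: measurable_funM => //; exact: measurable_cst.
apply: measurable_funM; last exact: measurable_cst.
by apply: measurableT_comp => //; exact: normr_measurable.
Qed.

Lemma mwK u v : measurable_fun setT (wK u v).
Proof.
apply: measurable_funM.
  apply: measurable_funX; apply: measurable_funB; last exact: measurable_cst.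
  by apply: measurable_funM => //; exact: measurable_cst.
apply: measurableT_comp; first exact: measurable_inv.
by apply: measurable_funM; [exact: measurable_cst | exact: mcc].
Qed.

Lemma wa_bd u v x : `|wa u v x| <= `|u| * Pk * h x + `|v| * Pk.
Proof.
rewrite /wa ger0_norm ?mulr_ge0 //.
have := ler_normB (u * h x) v; rewrite normrM (ger0_norm (h0 x)) => e.
have := ler_wpM2r Pk0 e; lra.
Qed.

Lemma int_amin u v t : 0 <= t ->
  P.-integrable setT (EFin \o (fun x => Num.min (wa u v x) (t * wK u v x))).
Proof.
move=> t0; apply: (int_bound _ (`|u| * Pk) (`|v| * Pk)).
- apply: measurable_minr; first exact: mwa.
  by apply: measurable_funM; [exact: measurable_cst | exact: mwK].
- by rewrite mulr_ge0.
- by rewrite mulr_ge0.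
move=> x; apply: le_trans (wa_bd u v x).
have a0 : 0 <= wa u v x by rewrite /wa mulr_ge0.
have K0 : 0 <= wK u v x.
  by rewrite /wK mulr_ge0 ?sqr_ge0 // invr_ge0 mulr_ge0 // cc_ge0.
rewrite ger0_norm; last by rewrite le_min a0 mulr_ge0.
by rewrite ger0_norm // ge_min lexx.
Qed.

Lemma dir
  (DO : forall l' b', 0 <= l' -> 0 <= b' ->
     (dual_fun P h s Pa Pk Q l b <= dual_fun P h s Pa Pk Q l' b')%E)
  u v del : 0 < del -> (forall t, 0 < t <= del -> 0 <= l + t * u /\ 0 <= b + t * v) ->
  0 <= u * (Iv (fun x => h x * ps x) - Q) - v * (Iv ps - Pa).
Proof.
move=> d0 tH.
apply: (lim_arg _ _ (wa u v) (wK u v) d0 (mwa u v) (mwK u v)).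
- by move=> x; rewrite /wa mulr_ge0.
- by move=> x; rewrite /wK mulr_ge0 ?sqr_ge0 // invr_ge0 mulr_ge0 // cc_ge0.
- apply: (int_bound _ (`|u| * Pk) (`|v| * Pk)); [exact: mwa|by rewrite mulr_ge0|by rewrite mulr_ge0|].
  exact: wa_bd.
move=> t /[dup] /andP[t0 _] /tH [L0 B0].
have := le_trans (DO _ _ L0 B0) (dual_le _ _).
rewrite dual_eq lee_fin.
have -> : l + t * u - l = t * u by ring.
have -> : b + t * v - b = t * v by ring.
have -> : Iv (mm (t * u) (t * v)) = t * \int[P]_x Num.min (wa u v x) (t * wK u v x).
  rewrite -RintegralZl //; last exact: int_amin (ltW t0).
  apply: eq_Rintegral => x _.
  rewrite /mm /wa /wK minr_pMr; last exact: ltW.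
  have -> : t * u * h x - t * v = t * (u * h x - v) by ring.
  rewrite normrM (ger0_norm (ltW t0)) exprMn.
  by congr (Num.min _ _); ring.
set I1 := \int[P]_x _.
have -> : LRr (l + t * u) (b + t * v) ps = LRr l b ps +
   t * (u * (Iv (fun x => h x * ps x) - Q) - v * (Iv ps - Pa)) by rewrite /LRr; ring.
move=> H.
have : 0 <= t * (u * (Iv (fun x => h x * ps x) - Q) - v * (Iv ps - Pa) + I1) by lra.
by rewrite pmulr_rge0.
Qed.


Lemma ae_hne0 : {ae P, forall x, h x != 0}.
Proof.
exists N0; split; [exact: mN0 | exact: PN0 |].
by move=> x /= /negP; rewrite negbK => /eqP.
Qed.

Lemma Ex_ps : Ex P ps = (Iv ps)%:E.
Proof. exact: (Ex_fin _ (int_q _ ps_adm)). Qed.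

Lemma main (DO : dual_optimal P h s Pa Pk Q l b) :
  primal_optimal P h s Pa Pk Q ps
  /\ (forall p, primal_optimal P h s Pa Pk Q p ->
        {ae P, forall nu, p nu = ps nu}).
Proof.
case: DO => _ [_ DO].
have pa := ps_adm.
set A := Iv (fun x => h x * ps x) - Q.
set B := Iv ps - Pa.
have hA : 0 <= A.
  have := @dir DO 1 0 1 ltr01; rewrite mul1r mul0r subr0; apply => t /andP[t0 _].
  by rewrite mulr0 addr0 mulr1; split => //; rewrite addr_ge0 // ltW.
have hB : B <= 0.
  have := @dir DO 0 1 1 ltr01; rewrite mul1r mul0r sub0r oppr_ge0; apply => t /andP[t0 _].
  by rewrite mulr0 addr0 mulr1; split => //; rewrite addr_ge0 // ltW.
have lA : l * A = 0.
  have [->|lp] := eqVneq l 0; first by rewrite mul0r.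
  have lp' : 0 < l by rewrite lt_neqAle eq_sym lp l0.
  have : 0 <= -1 * A - 0 * B.
    apply: (@dir DO (-1) 0 l lp') => t /andP[t0 tl].
    by rewrite mulr0 addr0; split => //; lra.
  rewrite mul0r subr0 mulN1r oppr_ge0 => hA'.
  have A0 : A = 0 by apply: le_anti; rewrite hA' hA.
  by rewrite A0 mulr0.
have bB : b * B = 0.
  have [->|bp] := eqVneq b 0; first by rewrite mul0r.
  have bp' : 0 < b by rewrite lt_neqAle eq_sym bp b0.
  have : 0 <= 0 * A - (-1) * B.
    apply: (@dir DO 0 (-1) b bp') => t /andP[t0 tl].
    by rewrite mulr0 addr0; split => //; lra.
  rewrite mul0r sub0r mulN1r opprK => hB'.
  have B0 : B = 0 by apply: le_anti; rewrite hB' hB.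
  by rewrite B0 mulr0.
have LRps : LRr l b ps = Iv (lr ps).
  rewrite /LRr -/A -/B lA bB; ring.
have feas_ps : feasible P h Pa Pk Q ps.
  split => //; split.
    by rewrite Ex_ps lee_fin; rewrite /B in hB; lra.
  by rewrite (Ex_fin _ (int_hq _ pa)) lee_fin; rewrite /A /Iv in hA; lra.
have rate_eq q : peak_admissible Pk q -> rate P h s q = (Iv (lr q))%:E.
  by move=> qa; exact: (Ex_fin _ (int_lr _ qa)).
have LRge q : feasible P h Pa Pk Q q -> Iv (lr q) <= LRr l b q.
  case=> qa [qE qH].
  rewrite (Ex_fin _ (int_q _ qa)) lee_fin in qE.
  rewrite (Ex_fin _ (int_hq _ qa)) lee_fin in qH.
  rewrite /LRr.
  have e1 : 0 <= l * (Iv (fun x => h x * q x) - Q) by rewrite mulr_ge0 // subr_ge0.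
  have e2 : 0 <= b * (Pa - Iv q) by rewrite mulr_ge0 // subr_ge0.
  have -> : b * (Iv q - Pa) = - (b * (Pa - Iv q)) by ring.
  lra.
have popt : primal_optimal P h s Pa Pk Q ps.
  split => // q fq; have qa : peak_admissible Pk q by case: fq.
  rewrite (rate_eq _ qa) (rate_eq _ pa) lee_fin -LRps.
  apply: (le_trans (LRge _ fq)).
  by have := key_bound q l b qa; rewrite !subrr I_mm0 addr0.
split => // p [fp pbest].
have pa' : peak_admissible Pk p by case: fp.
have := pbest _ feas_ps; rewrite (rate_eq _ pa) (rate_eq _ pa') lee_fin => r1.
have := key_unique p pa'; rewrite LRps => k1.
have := LRge _ fp => k2.
set C := fun x => cc x * (p x - ps x) ^+ 2.
have C0 x : 0 <= C x by rewrite /C mulr_ge0 ?cc_ge0 ?sqr_ge0.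
have IC0 : Iv C = 0.
  apply/eqP; rewrite eq_le; apply/andP; split; last exact: Rintegral_ge0.
  rewrite /C; lra.
have iC : P.-integrable setT (EFin \o C).
  apply: (int_bound _ 0 (4^-1)).
  - apply: measurable_funM; first exact: mcc.
    apply: measurable_funX; apply: measurable_funB; first by case: pa'.
    exact: mps.
  - by [].
  - by rewrite invr_ge0.
  by move=> x; apply: cc_bd; case: pa'.
have e : (\int[P]_(x in setT) `|(EFin \o C) x| = 0)%E.
  transitivity (\int[P]_(x in setT) (EFin \o C) x)%E.
    by apply: eq_integral => x _ /=; rewrite ger0_norm.
  rewrite -[LHS]fineK; last exact: integrable_fin_num.
  by congr (_%:E); exact: IC0.
have mC : measurable_fun setT (EFin \o C) by case/integrableP: iC.
have ae1 := (ae_eq_integral_abs P measurableT mC).1 e.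
apply: filterS2 ae1 ae_hne0 => x H1 H2.
have hp : 0 < h x by rewrite lt_neqAle eq_sym H2 h0.
have := H1 I; rewrite /= => /eqP; rewrite eqe /C => /eqP.
move/eqP; rewrite mulf_eq0 (gt_eqF (cc_gt0 x hp)) /= sqrf_eq0 subr_eq0.
by move/eqP.
Qed.

End Prob.

Theorem proposition4p3 (R : realType) (d : measure_display)
  (T : measurableType d) (P : probability T R) (h : T -> R)
  (sigma2 Pavg Ppeak Qbar lam beta : R) :
  measurable_fun setT h -> (forall nu, 0 <= h nu) ->
  P.-integrable setT (fun nu => (h nu)%:E) ->
  has_continuous_pdf P h ->
  0 < sigma2 -> 0 < Pavg -> Pavg <= Ppeak -> 0 <= Qbar ->
  (exists p, feasible P h Pavg Ppeak Qbar p) ->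
  dual_optimal P h sigma2 Pavg Ppeak Qbar lam beta ->
  primal_optimal P h sigma2 Pavg Ppeak Qbar (opt_alloc h sigma2 Ppeak lam beta)
  /\ (forall p, primal_optimal P h sigma2 Pavg Ppeak Qbar p ->
        {ae P, forall nu, p nu = opt_alloc h sigma2 Ppeak lam beta nu}).
Proof.
move=> mh h0 ih hpdf s0 Pa0 PaPk Q0 _ DO.
have Pk0 : 0 <= Ppeak by rewrite (le_trans (ltW Pa0)).
have [l0 [b0 _]] := DO.
exact: (@main _ _ _ P h mh h0 ih hpdf sigma2 Pavg Ppeak Qbar lam beta s0 Pk0 l0 b0 DO).
Qed.
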